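(* Let $T$ be a rooted binary tree with black/white-coloured leaves and the induced node colouring and classification as described in the context, and suppose $T$ contains more than one maximal black subtree. Then no SPR operation on $T$ belonging to the class $(\mathrm{G},\ast,\ast,\ast)$ (i.e. pruning a grey node) produces a compatible tree.
   Context: All trees are rooted binary trees; every non-leaf node has exactly two children and every non-root node $n$ has a parent $\mathrm{pa}(n)$. A ''subtree'' always means a node together with all of its descendants. Colouring: each leaf is coloured black (B) or white (W); an internal node is black if both children are black, white if both children are white, and grey (G) otherwise. A subtree is black (resp. white) if all its nodes are black (resp. white); it is maximal if no strictly larger subtree containing it is black (resp. white). Classification: a black or white node is of type ''r'' if it is the root of a maximal subtree of its own colour, and of type ''b'' otherwise; all grey nodes are of type ''b'' by convention. A tree is compatible if it contains at most one maximal black subtree. SPR operation $(u,v)$ on $T$: $u$ is a non-root node, $v$ is a node with $v\notin\{u,\mathrm{pa}(u)\}$ and $v$ not a descendant of $u$; the subtree rooted at $u$ is pruned (the edge to $u$ is removed and $\mathrm{pa}(u)$ deleted, its other child taking its place), then regrafted by inserting a new node on the edge from $v$ to its parent (or as a new root above $v$ if $v$ is the root) whose two children are $v$ and $u$; colours of the resulting tree are recomputed by the same rule. The operation belongs to class $(x,y,z,w)$ where $x,z\in\{\mathrm{B},\mathrm{W},\mathrm{G}\}$ are the colours in $T$ of $u$ and $v$, and $y,w\in\{\mathrm{r},\mathrm{b}\}$ their classifications in $T$; $\ast$ denotes any value. *)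

(* Defs.v *)
From mathcomp Require Import all_boot.
Set Implicit Arguments. Unset Strict Implicit. Unset Printing Implicit Defensive.

(* Rooted binary trees; leaves carry a colour: true = black (B), false = white (W). *)
Inductive tree := Leaf of bool | Node of tree & tree.

Inductive colour := Bk | Wh | Gr.

Fixpoint colour_of (t : tree) : colour :=
  match t with
  | Leaf true => Bk
  | Leaf false => Wh
  | Node l r =>
      match colour_of l, colour_of r with
      | Bk, Bk => Bk
      | Wh, Wh => Wh
      | _, _ => Gr
      end
  end.

(* Nodes are addressed by their path from the root (false = left, true = right). *)
Fixpoint subt (t : tree) (p : seq bool) : option tree :=
  match p with
  | [::] => Some t
  | b :: p' => match t with
               | Leaf _ => None
               | Node l r => subt (if b then r else l) p'
               end
  end.

Definition is_node (t : tree) (p : seq bool) : bool :=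
  if subt t p is Some _ then true else false.

Definition node_colour (t : tree) (p : seq bool) : option colour :=
  option_map colour_of (subt t p).

Definition pa (p : seq bool) : seq bool := take (size p).-1 p.

Definition black_subtree (t : tree) (p : seq bool) : Prop :=
  is_node t p /\ forall q, is_node t (p ++ q) -> node_colour t (p ++ q) = Some Bk.

Definition maximal_black (t : tree) (p : seq bool) : Prop :=
  black_subtree t p /\
  forall q, prefix q p -> q != p -> ~ black_subtree t q.

Definition compatible (t : tree) : Prop :=
  forall p1 p2, maximal_black t p1 -> maximal_black t p2 -> p1 = p2.

Fixpoint replace (t : tree) (p : seq bool) (s : tree) : tree :=
  match p with
  | [::] => s
  | b :: p' => match t with
               | Leaf c => Leaf c
               | Node l r => if b then Node l (replace r p' s)
                             else Node (replace l p' s) r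
               end
  end.

Definition valid_spr (t : tree) (u v : seq bool) : Prop :=
  [&& u != [::], is_node t u, is_node t v,
      v != u, v != pa u & ~~ prefix u v].

(* The tree resulting from SPR (u,v): prune the subtree at u (its parent pa u is
   deleted and the sibling takes its place), then regraft by inserting a new node
   above v (the image of v in the pruned tree) whose children are v and u. *)
Definition spr (t : tree) (u v : seq bool) : tree :=
  let p := pa u in
  let b := nth false u (size u).-1 in
  let sib := rcons p (~~ b) in
  let su := odflt (Leaf false) (subt t u) in
  let ssib := odflt (Leaf false) (subt t sib) in
  let t1 := replace t p ssib in
  let v' := if prefix sib v then p ++ drop (size sib) v else v in
  let sv := odflt (Leaf false) (subt t1 v') in
  replace t1 v' (Node sv su).

(* Main.v *)
Require Import Defs.
From mathcomp Require Import all_boot zify.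
From Stdlib Require Import Setoid.

Definition isBk (c : colour) : bool := if c is Bk then true else false.

Fixpoint mbs (T : tree) : seq (seq bool) :=
  match T with
  | Leaf true => [:: [::]]
  | Leaf false => [::]
  | Node l r => if isBk (colour_of (Node l r)) then [:: [::]]
                else map (cons false) (mbs l) ++ map (cons true) (mbs r)
  end.

Lemma mbs_node l r : mbs (Node l r) = if isBk (colour_of (Node l r)) then [:: [::]]
                else map (cons false) (mbs l) ++ map (cons true) (mbs r).
Proof. by []. Qed.

Lemma subt_cat T p q : subt T (p ++ q) = obind (subt^~ q) (subt T p).
Proof.
elim: p T => [|b p IH] [c|l r] //=; by case: q.
Qed.


Lemma black_desc s : colour_of s = Bk -> forall q s', subt s q = Some s' -> colour_of s' = Bk.
Proof.
elim: s => [c|l IHl r IHr] Hc [|b q] s' //=.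
- by case=> <-.
- by case=> <-.
- have [Hl Hr] : colour_of l = Bk /\ colour_of r = Bk.
    by move: Hc => /=; case: (colour_of l); case: (colour_of r).
  by case: b; [apply: IHr|apply: IHl].
Qed.


Definition blk T p : Prop := exists s, subt T p = Some s /\ colour_of s = Bk.

Lemma black_subtreeE T p : black_subtree T p <-> blk T p.
Proof.
split.
- case=> Hn H; have := H [::]; rewrite cats0 /node_colour => H0.
  have {H0} := H0 Hn.
  move: Hn; rewrite /is_node; case E: (subt T p) => [s|] //= _ [] ?; by exists s.
- case=> s [Hs Hc]; split; first by rewrite /is_node Hs.
  move=> q; rewrite /is_node /node_colour subt_cat Hs /=.
  case E: (subt s q) => [s'|] //= _; by rewrite (@black_desc s Hc q s' E).
Qed.


Lemma maximalE T p : maximal_black T p <->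
  blk T p /\ forall q, prefix q p -> q != p -> ~ blk T q.
Proof.
rewrite /maximal_black; split.
- case=> /black_subtreeE H1 H2; split=> // q H3 H4 /black_subtreeE; exact: H2.
- case=> /black_subtreeE H1 H2; split=> // q H3 H4 /black_subtreeE; exact: H2.
Qed.


Lemma mem_mbs T p : p \in mbs T <-> maximal_black T p.
Proof.
rewrite maximalE.
elim: T p => [c|l IHl r IHr] p.
- case: p => [|b p].
  + split.
    * case: c => //= _; split; first by exists (Leaf true).
      by move=> [|? ?].
    * case=> [[s [[<-]]]] /=; case: c => //.
  + split; first by case: c.
    by case=> [[s []]].
- rewrite mbs_node; case E: (colour_of (Node l r)) => /=.
  + rewrite inE; split.
    * move=> /eqP ->; split; first by exists (Node l r).
      by move=> [|? ?].
    * case=> _ H; apply/eqP; case: p H => // b p H; exfalso.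
      by apply: (H [::]) => //; exists (Node l r).
  + case: p => [|b p].
    * split; first by rewrite mem_cat; case/orP => /mapP [? _].
      case=> [[s [[<-]]]]; by move: E => /= ->.
    * have Hc : forall (A B : seq (seq bool)) x,
          (true :: x \in map (cons false) A) = false /\
          (false :: x \in map (cons true) B) = false.
        by move=> A B x; split; apply/mapP => -[z _ []].
      have -> : (b :: p \in [seq false :: i | i <- mbs l] ++ [seq true :: i | i <- mbs r])
              = (p \in mbs (if b then r else l)).
        have inj : forall c : bool, injective (cons c) by move=> c x y [].
        rewrite mem_cat; case: b.
        - have -> : (true :: p \in [seq false :: i | i <- mbs l]) = false by apply/mapP => -[z _ []].
          by rewrite (mem_map (inj true)).
        - have -> : (false :: p \in [seq true :: i | i <- mbs r]) = false by apply/mapP => -[z _ []].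
          by rewrite (mem_map (inj false)) orbF.
      have IH : p \in mbs (if b then r else l) <-> blk (if b then r else l) p /\
         (forall q, prefix q p -> q != p -> ~ blk (if b then r else l) q) by case: b.
      rewrite IH; split.
      - case=> H1 H2; split=> // q Hq Hn; case: q Hq Hn => [|b' q] Hq Hn.
        + by case=> s [[<-]]; move: E => /= ->.
        + move: Hq; rewrite ?prefix_cons => /andP [/eqP Eb Hq']; subst b'; apply: (H2 q Hq').
          by apply: contra Hn => /eqP ->.
      - case=> H1 H2; split=> // q Hq Hn; apply: (H2 (b :: q)).
        + by rewrite ?prefix_cons /= eqxx.
        + by apply: contra Hn; rewrite eqseq_cons eqxx.
  + case: p => [|b p].
    * split; first by rewrite mem_cat; case/orP => /mapP [? _].
      case=> [[s [[<-]]]]; by move: E => /= ->.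
    * have Hc : forall (A B : seq (seq bool)) x,
          (true :: x \in map (cons false) A) = false /\
          (false :: x \in map (cons true) B) = false.
        by move=> A B x; split; apply/mapP => -[z _ []].
      have -> : (b :: p \in [seq false :: i | i <- mbs l] ++ [seq true :: i | i <- mbs r])
              = (p \in mbs (if b then r else l)).
        have inj : forall c : bool, injective (cons c) by move=> c x y [].
        rewrite mem_cat; case: b.
        - have -> : (true :: p \in [seq false :: i | i <- mbs l]) = false by apply/mapP => -[z _ []].
          by rewrite (mem_map (inj true)).
        - have -> : (false :: p \in [seq true :: i | i <- mbs r]) = false by apply/mapP => -[z _ []].
          by rewrite (mem_map (inj false)) orbF.
      have IH : p \in mbs (if b then r else l) <-> blk (if b then r else l) p /\
         (forall q, prefix q p -> q != p -> ~ blk (if b then r else l) q) by case: b.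
      rewrite IH; split.
      - case=> H1 H2; split=> // q Hq Hn; case: q Hq Hn => [|b' q] Hq Hn.
        + by case=> s [[<-]]; move: E => /= ->.
        + move: Hq; rewrite ?prefix_cons => /andP [/eqP Eb Hq']; subst b'; apply: (H2 q Hq').
          by apply: contra Hn => /eqP ->.
      - case=> H1 H2; split=> // q Hq Hn; apply: (H2 (b :: q)).
        + by rewrite ?prefix_cons /= eqxx.
        + by apply: contra Hn; rewrite eqseq_cons eqxx.
Qed.


Lemma uniq_mbs T : uniq (mbs T).
Proof.
have inj : forall c : bool, injective (cons c) by move=> c x y [].
elim: T => [[]|l IHl r IHr] //; rewrite mbs_node; case: isBk => //.
rewrite cat_uniq !(map_inj_uniq (inj _)) IHl IHr /= andbT.
by apply/hasPn => x /mapP [y _ ->]; apply/mapP => -[z _ []].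
Qed.

Definition mb T := size (mbs T).

Lemma compat_mb T : compatible T -> mb T <= 1.
Proof.
move=> H; rewrite /mb; have := uniq_mbs T.
case E: (mbs T) => [|a [|b s]] //= /andP [Hab _].
have Ha : a \in mbs T by rewrite E inE eqxx.
have Hb : b \in mbs T by rewrite E !inE eqxx orbT.
move/mem_mbs: Ha => Ha; move/mem_mbs: Hb => Hb.
have := H a b Ha Hb => Eab; subst b.
by rewrite inE eqxx in Hab.
Qed.

Lemma two_mb T p1 p2 : p1 <> p2 -> maximal_black T p1 -> maximal_black T p2 -> 2 <= mb T.
Proof.
move=> Hn /mem_mbs H1 /mem_mbs H2; rewrite /mb.
move: H1 H2; case: (mbs T) => [|a [|b s]] //=; rewrite !inE => /eqP E1 /eqP E2.
by case: Hn; rewrite E1 E2.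
Qed.

Definition W := Leaf false.

Fixpoint nb (T : tree) : nat :=
  match T with Leaf c => c : nat | Node l r => nb l + nb r end.

Lemma mb_node l r : colour_of (Node l r) <> Bk -> mb (Node l r) = mb l + mb r.
Proof.
move=> H; rewrite /mb mbs_node.
have -> : isBk (colour_of (Node l r)) = false.
  by move: H; case: (colour_of (Node l r)) => // /(_ erefl).
by rewrite size_cat !size_map.
Qed.

Lemma mb_black T : colour_of T = Bk -> mb T = 1.
Proof.
case: T => [[]|l r] //= H; rewrite /mb mbs_node.
by have -> : isBk (colour_of (Node l r)) = true by rewrite /= H.
Qed.

Lemma nonWh_nb T : colour_of T <> Wh -> 0 < nb T.
Proof.
elim: T => [[]|l IHl r IHr] //= H.
rewrite addn_gt0; apply/orP.
case El: (colour_of l) H; case Er: (colour_of r) => //= _;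
  by [left; apply: IHl; rewrite El | right; apply: IHr; rewrite Er].
Qed.

Lemma mb0 T : (mb T == 0) = (nb T == 0).
Proof.
elim: T => [[]|l IHl r IHr] //.
case E: (colour_of (Node l r)).
- rewrite mb_black //=; have := nonWh_nb (Node l r); rewrite E => /(_ ltac:(done)).
  by move=> /= ; case: (nb l + nb r).
- by rewrite mb_node ?E //= !addn_eq0 IHl IHr.
- by rewrite mb_node ?E //= !addn_eq0 IHl IHr.
Qed.

Lemma grey_mb T : colour_of T = Gr -> 0 < mb T.
Proof.
move=> H; have := nonWh_nb T; rewrite H => /(_ ltac:(done)).
by rewrite !lt0n mb0.
Qed.

Lemma colour_replace T q s : is_node T q -> colour_of s <> Bk ->
  colour_of (replace T q s) <> Bk.
Proof.
elim: q T => [|b q IH] [c|l r] //= Hn Hs.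
case: b Hn => Hn /=.
- have := IH r Hn Hs; case: (colour_of l); case: (colour_of (replace r q s)) => //.
- have := IH l Hn Hs; case: (colour_of r); case: (colour_of (replace l q s)) => //.
Qed.

Lemma W_nonBk : colour_of W <> Bk. Proof. by []. Qed.

Lemma mb_replace T q s : is_node T q -> colour_of s <> Bk ->
  mb (replace T q s) = mb (replace T q W) + mb s.
Proof.
elim: q T => [|b q IH] [c|l r] //= Hn Hs.
case: b Hn => Hn /=.
- rewrite !mb_node; first by rewrite IH // addnA.
  + move=> /=; have := colour_replace r q W Hn W_nonBk.
    by case: (colour_of l); case: (colour_of (replace r q W)).
  + move=> /=; have := colour_replace r q s Hn Hs.
    by case: (colour_of l); case: (colour_of (replace r q s)).
- rewrite !mb_node; first by rewrite (IH l) // addnAC.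
  + move=> /=; have := colour_replace l q W Hn W_nonBk.
    by case: (colour_of r); case: (colour_of (replace l q W)).
  + move=> /=; have := colour_replace l q s Hn Hs.
    by case: (colour_of r); case: (colour_of (replace l q s)).
Qed.

Lemma nb_replace T q s : is_node T q ->
  nb (replace T q s) + nb (odflt W (subt T q)) = nb T + nb s.
Proof.
elim: q T => [|b q IH] [c|l r] //= Hn; first by rewrite addnC.
- by rewrite addnC.
case: b Hn => Hn /=.
- by rewrite -addnA IH // addnA.
- by rewrite addnAC IH // addnAC.
Qed.

Lemma replace_subt T q s : subt T q = Some s -> replace T q s = T.
Proof.
elim: q T => [|b q IH] [c|l r] //=; first by case=> ->.
- by case=> ->.
by case: b => H; rewrite IH.
Qed.

Lemma subt_replace_same T p s : is_node T p -> subt (replace T p s) p = Some s.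
Proof.
elim: p T => [|b p IH] [c|l r] H //=; first (by case: s); first (by case: s).
by case: b H => H /=; rewrite IH.
Qed.

Lemma subt_replace_cat T p s w : is_node T p -> subt (replace T p s) (p ++ w) = subt s w.
Proof. by move=> H; rewrite subt_cat subt_replace_same. Qed.

Lemma is_node_replace T p q s : is_node T q -> (forall c w, q <> p ++ c :: w) ->
  is_node (replace T p s) q.
Proof.
elim: p T q => [|b p IH] [c|l r] [|b' q] Hn Hq //=.
- by case: s.
- by case: s.
- by case: (Hq b' q).
- by case: b Hq.
- case: b Hq => Hq; case: b' Hn Hq => Hn Hq /=; rewrite /is_node /= //.
  + apply: IH => // c w E; apply: (Hq c w); by rewrite E.
  + apply: IH => // c w E; apply: (Hq c w); by rewrite E.
Qed.

Lemma subt_nil T : subt T [::] = Some T. Proof. by case: T. Qed.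

Theorem lemma5 (t : tree) :
  (exists p1 p2, p1 <> p2 /\ maximal_black t p1 /\ maximal_black t p2) ->
  forall u v : seq bool, valid_spr t u v -> node_colour t u = Some Gr ->
  ~ compatible (spr t u v).
Proof.
move=> [p1 [p2 [Hne [H1 H2]]]] u v Hv Hu Hcomp.
have Hmb := two_mb t p1 p2 Hne H1 H2.
move: Hv; rewrite /valid_spr => /andP [Hu0 /andP [Hun /andP [Hvn /andP [_ /andP [_ Hpre]]]]].
case/lastP: u Hu0 Hun Hpre Hu Hcomp => [//|p b] _ Hun Hpre Hu Hcomp.
have Hpa : pa (rcons p b) = p by rewrite /pa size_rcons -cats1 take_size_cat.
have Hnth : nth false (rcons p b) (size (rcons p b)).-1 = b
  by rewrite size_rcons nth_rcons ltnn eqxx.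
have Hsc : forall q c, subt t (rcons q c) = obind (subt^~ [:: c]) (subt t q)
  by move=> q c; rewrite -cats1 subt_cat.
move: Hu Hun; rewrite /node_colour /is_node Hsc.
case Ep: (subt t p) => [[c|l r]|] //= Hu _.
set S := if b then r else l in Hu.
have HS : colour_of S = Gr by move: Hu; rewrite subt_nil => -[].
set ssib := if ~~ b then r else l.
have HuS : subt t (rcons p b) = Some S by rewrite Hsc Ep /= subt_nil.
have Hsib : subt t (rcons p (~~ b)) = Some ssib by rewrite Hsc Ep /= subt_nil.
have Hpn : is_node t p by rewrite /is_node Ep.
move: Hcomp; rewrite /spr Hpa Hnth HuS Hsib /=.
set t1 := replace t p ssib.
set v' := if prefix _ v then _ else _.
have Hv'n : is_node t1 v'.
  rewrite /v'; case: ifP => Hp.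
  - case/prefixP: Hp => w Ev.
    rewrite Ev drop_size_cat // /is_node /t1 subt_replace_cat //.
    by move: Hvn; rewrite Ev /is_node subt_cat Hsib.
  - apply: is_node_replace => // c w Ev.
    case: (boolP (c == b)) => [/eqP Ec|Ec].
    + move/negP: Hpre; apply; apply/prefixP; exists w.
      by rewrite Ev Ec -cats1 -catA.
    + move/negbT/negP: Hp; apply; apply/prefixP; exists w.
      have Ec' : c = ~~ b by move: Ec; clear; case: c; case: b.
      by rewrite Ev Ec' -cats1 -catA.
set sv := odflt (Leaf false) (subt t1 v').
move=> /compat_mb.
have HNn : colour_of (Node sv S) <> Bk by rewrite /= HS; case: (colour_of sv).
rewrite (mb_replace t1 v' (Node sv S) Hv'n HNn).
rewrite mb_node; last by [].
have HS1 := grey_mb S HS.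
have Ht : mb t = mb (replace t (rcons p b) W) + mb S.
  rewrite -(mb_replace t (rcons p b) S); first by rewrite replace_subt.
  - by rewrite /is_node HuS.
  - by rewrite HS.
move=> Hle.
have E1 : mb (replace t1 v' W) == 0 by apply/eqP; lia.
have E2 : mb sv == 0 by apply/eqP; lia.
rewrite mb0 in E1; rewrite mb0 in E2.
have N1 := nb_replace t1 v' W Hv'n.
have N2 := nb_replace t p ssib Hpn.
have N3 : nb (replace t (rcons p b) W) + nb S = nb t + nb W.
  have := nb_replace t (rcons p b) W; rewrite HuS /=; apply.
  by rewrite /is_node HuS.
rewrite Ep /= in N2.
have Hlr : nb l + nb r = nb S + nb ssib by rewrite /S /ssib; case: (b) => //=; rewrite addnC.
have E3 : mb (replace t (rcons p b) W) == 0.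
  rewrite mb0; apply/eqP.
  move/eqP: E1 => E1; move/eqP: E2 => E2.
  rewrite /sv /W /t1 in E1 E2 N1 N2 N3 *. lia.
move/eqP: E3 => E3; lia.
Qed.
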